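(* (List size bound.) Let $R>0$, let $L\subset\mathbb R^d$ be a finite list of candidate regressors, and let $T$ be a finite set of batches. Let $L'\subseteq L$ be a sublist such that (1) the system $\mathrm{IE}(\beta;L,T,R)$ has a solution for each $\beta\in L'$, and (2) $\|\beta_1-\beta_2\|_2\ge c\big(R+k\alpha^{-1/k}\sigma Q^{1/k}/\sqrt n\big)$ for any two distinct $\beta_1,\beta_2\in L'$, where $c$ is the constant appearing in $\mathrm{IE}$. Then $|L'|\le O(1/\alpha)$.
   Context: Parameters $\alpha\in(0,1/2)$, $k,n\in\mathbb Z_+$, $\sigma>0$, $Q\ge1$ are fixed; each batch $B\in T$ is a finite multiset of pairs $(X,y)\in\mathbb R^d\times\mathbb R$. For $\beta\in L$, $\mathrm{IE}(\beta;L,T,R)$ is the following system of linear inequalities in the variables $\mathcal W:T\to[0,1]$: (i) $\sum_{B\in T}\mathcal W(B)\ge0.9\alpha|T|$; (ii) for every $\beta'\in L$ with $\|\beta'-\beta\|_2\ge c(R+k\alpha^{-1/k}\sigma Q^{1/k}/\sqrt n)$, where $c$ is a sufficiently large absolute constant, $\sum_{B\in T}\mathbb 1\{\sum_{(X,y)\in B}(y-X^\top\beta)^2\le\sum_{(X,y)\in B}(y-X^\top\beta')^2\}\,\mathcal W(B)\le\frac{\alpha}{20}\sum_{B\in T}\mathcal W(B)$. *)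

(* Defs.v *)
From HB Require Import structures.
From mathcomp Require Import all_boot all_order all_algebra.
From mathcomp Require Import all_classical all_reals all_analysis.
Set Implicit Arguments. Unset Strict Implicit. Unset Printing Implicit Defensive.
Import Order.TTheory GRing.Theory Num.Theory.
Local Open Scope ring_scope.

Definition norm2 {R : realType} {d : nat} (v : 'cV[R]_d) : R :=
  Num.sqrt (\sum_(i < d) v i 0 ^+ 2).

Definition dotv {R : realType} {d : nat} (X b : 'cV[R]_d) : R :=
  \sum_(i < d) X i 0 * b i 0.

(* A batch is a finite multiset of pairs (X, y), represented as a seq. *)
Definition batch_t (R : realType) (d : nat) := seq ('cV[R]_d * R).

Definition bloss {R : realType} {d : nat} (B : batch_t R d) (b : 'cV[R]_d) : R :=
  \sum_(p <- B) (p.2 - dotv p.1 b) ^+ 2.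

Definition ie_thr {R : realType} (c alpha sigma Q Rr : R) (k n : nat) : R :=
  c * (Rr + k%:R * powR alpha (- (k%:R)^-1) * sigma * powR Q ((k%:R)^-1)
            / Num.sqrt n%:R).

(* W : T -> [0,1] is a solution of IE(beta; L, T, R); the batches of T are
   indexed by a finite type T via [batch]. *)
Definition IE_sol {R : realType} {d : nat} (c alpha sigma Q Rr : R) (k n : nat)
    (T : finType) (batch : T -> batch_t R d) (L : seq 'cV[R]_d)
    (beta : 'cV[R]_d) (W : T -> R) : Prop :=
  [/\ (forall B, 0 <= W B <= 1),
      \sum_(B : T) W B >= 9 / 10 * alpha * #|T|%:R &
      forall beta', beta' \in L ->
        norm2 (beta' - beta) >= ie_thr c alpha sigma Q Rr k n ->
        \sum_(B : T) (if bloss (batch B) beta <= bloss (batch B) beta'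
                      then W B else 0)
          <= alpha / 20 * \sum_(B : T) W B].

(* Main.v *)
Require Import Defs.
From HB Require Import structures.
From mathcomp Require Import all_boot all_order all_algebra.
From mathcomp Require Import all_classical all_reals all_analysis.
From mathcomp Require Import ring lra.
Import Order.TTheory GRing.Theory Num.Theory.
Local Open Scope ring_scope.

Theorem lemma3p7 (R : realType) :
  exists C : R, 0 < C /\
  forall (d : nat) (alpha sigma Q Rr c : R) (k n : nat)
         (T : finType) (batch : T -> batch_t R d) (L L' : seq 'cV[R]_d),
    0 < alpha -> alpha < 1 / 2 -> (0 < k)%N -> (0 < n)%N ->
    0 < sigma -> 1 <= Q -> 0 < Rr -> 0 < c ->
    (0 < #|T|)%N ->
    uniq L' -> {subset L' <= L} ->
    (forall beta, beta \in L' ->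
       exists W : T -> R, IE_sol c alpha sigma Q Rr k n batch L beta W) ->
    (forall b1 b2, b1 \in L' -> b2 \in L' -> b1 != b2 ->
       norm2 (b1 - b2) >= ie_thr c alpha sigma Q Rr k n) ->
    (size L')%:R <= C / alpha.
Proof.
exists 3; split => //.
move=> d alpha sigma Q Rr c k n T batch L L' a0 a1 k0 n0 s0 Q1 R0 c0 T0
  uL sub HIE Hsep.
set m := size L'.
pose b (i : 'I_m) := nth 0 L' i.
have bin i : b i \in L' by apply: mem_nth; exact: ltn_ord.
have binj i j : i != j -> b i != b j.
  by move=> ij; rewrite /b nth_uniq.
have [Wf HW] := choice (fun (i : 'I_m) => HIE (b i) (bin i)).
pose ind (i j : 'I_m) B : R :=
  if bloss (batch B) (b i) <= bloss (batch B) (b j) then 1 else 0.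
pose Si i := \sum_(B : T) Wf i B.
pose sB B := \sum_(i < m) Wf i B.
pose S := \sum_(i < m) Si i.
have W01 i B : 0 <= Wf i B <= 1 by case: (HW i).
have W0 i B : 0 <= Wf i B by case/andP: (W01 i B).
have W1 i B : Wf i B <= 1 by case/andP: (W01 i B).
have Sge i : 9/10*alpha*#|T|%:R <= Si i by case: (HW i).
have Si0 i : 0 <= Si i by apply: sumr_ge0 => B _.
have ind0 i j B : 0 <= ind i j B by rewrite /ind; case: ifP.
have key1 i j : \sum_B ind i j B * Wf i B <= Si i * ((i==j)%:R + alpha/20).
  case: (eqVneq i j) => [<-|ij].
    rewrite ?eqxx /= (eq_bigr (fun B => Wf i B)); last first.
      by move=> B _; rewrite /ind lexx mul1r.
    rewrite -/(Si i); have := Si0 i; nra.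
  case: (HW i) => _ _ H.
  have := H (b j) (sub _ (bin j)) (Hsep _ _ (bin j) (bin i) (binj j i _)).
  rewrite eq_sym ij => /(_ isT) H2.
  rewrite (eq_bigr (fun B => if bloss (batch B) (b i) <= bloss (batch B) (b j)
      then Wf i B else 0)); last first.
    by move=> B _; rewrite /ind; case: ifP; rewrite ?mul1r ?mul0r.
  apply: (le_trans H2); rewrite -/(Si i) /=; lra.
have upper : \sum_(i < m) \sum_(j < m) \sum_B ind i j B * Wf i B
    <= S * (1 + m%:R * alpha / 20).
  rewrite /S mulr_suml; apply: ler_sum => i _.
  apply: (le_trans (ler_sum _ (fun j _ => key1 i j))).
  rewrite -mulr_sumr big_split /= sumr_const card_ord.
  rewrite (bigD1 i) //= eqxx big1 => [|j /negbTE]; last by rewrite eq_sym => ->.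
  rewrite addr0; rewrite le_eqVlt; apply/orP; left; apply/eqP; congr (_*(_+_)); rewrite -mulr_natr; ring.
have lower B : sB B ^+ 2 / 2 <= \sum_(i < m) \sum_(j < m) ind i j B * Wf i B.
  pose P := \sum_(i < m) \sum_(j < m) ind i j B * Wf i B * Wf j B.
  have st1 : P <= \sum_(i < m) \sum_(j < m) ind i j B * Wf i B.
    apply: ler_sum => i _; apply: ler_sum => j _.
    apply: ler_piMr => //; exact: mulr_ge0.
  have st2 : sB B ^+ 2 <= P + P.
    have -> : sB B ^+ 2 = \sum_(i < m) \sum_(j < m) Wf i B * Wf j B.
      by rewrite expr2 /sB mulr_suml; apply: eq_bigr => i _; rewrite mulr_sumr.
    have P' : P = \sum_(i < m) \sum_(j < m) ind j i B * Wf j B * Wf i B.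
      by rewrite /P exchange_big.
    rewrite {2}P' /P -big_split /=; apply: ler_sum => i _.
    rewrite -big_split /=; apply: ler_sum => j _.
    have h := mulr_ge0 (W0 i B) (W0 j B).
    rewrite /ind.
    case: ifP => h1; case: ifP => h2; rewrite ?mul1r ?mul0r; try nra.
  lra.
have hN : 0 < #|T|%:R :> R by rewrite ltr0n.
set N := #|T|%:R : R.
have SB : S = \sum_B sB B by rewrite /S /Si /sB exchange_big.
have CS : S ^+ 2 / N <= \sum_B sB B ^+ 2.
  pose a := S / N.
  have h0 : 0 <= \sum_B (sB B - a) ^+ 2 by apply: sumr_ge0 => B _; exact: sqr_ge0.
  have e : \sum_B (sB B - a) ^+ 2
      = \sum_B sB B ^+ 2 - (a *+ 2) * S + a ^+ 2 * N.
    rewrite (eq_bigr (fun B => sB B ^+2 - (a*+2) * sB B + a^+2)); last first.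
      by move=> B _; ring.
    rewrite !big_split /= sumrN -mulr_sumr sumr_const -SB /N mulr_natr.
    by [].
  move: h0; rewrite e /a.
  have -> : S / N *+ 2 * S = 2 * (S ^+ 2 / N) by rewrite mulr2n; field; lra.
  have -> : (S / N) ^+ 2 * N = S ^+ 2 / N by field; lra.
  lra.
have mid : \sum_B sB B ^+ 2 / 2 <= S * (1 + m%:R * alpha / 20).
  apply: (le_trans _ upper).
  rewrite (eq_bigr (fun i => \sum_B \sum_(j<m) ind i j B * Wf i B)); last first.
    by move=> i _; rewrite exchange_big.
  rewrite exchange_big /=; apply: ler_sum => B _.
  exact: lower.
have Sm : m%:R * (9/10*alpha*N) <= S.
  have : \sum_(i < m) (9/10*alpha*N) <= S by apply: ler_sum => i _; exact: Sge.
  by rewrite sumr_const card_ord [m%:R * _]mulr_natl.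
rewrite -mulr_suml in mid.
have m0 : 0 <= m%:R :> R by exact: ler0n.
have final : m%:R * alpha <= 3.
  case: (posnP m) => [m00|mpos].
    by rewrite m00 mul0r.
  have mp : 0 < m%:R :> R by rewrite ltr0n.
  have Spos : 0 < S.
    apply: lt_le_trans Sm; apply: mulr_gt0 => //; apply: mulr_gt0 => //; lra.
  have h1 : S ^+ 2 / N / 2 <= S * (1 + m%:R * alpha / 20) by lra.
  have h2 : S <= 2 * N * (1 + m%:R * alpha / 20).
    have e : S ^+ 2 / N / 2 = S * (S / (2 * N)) by field; lra.
    move: h1; rewrite e ler_pM2l // ler_pdivrMr; last lra.
    by rewrite mulrC.
  have h3 : m%:R * (9 / 10 * alpha * N) <= 2 * N * (1 + m%:R * alpha / 20).
    exact: le_trans Sm h2.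
  have h4 : N * (m%:R * alpha * 8 / 10) <= N * 2 by nra.
  move: h4; rewrite ler_pM2l // => h4; lra.
rewrite ler_pdivlMr //.
Qed.
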